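(* Let $G$ be a finite simple graph, $k\ge 2$, and let $e=\{a,b\}$ be an edge of $G$. Suppose that for every $k$-matching $\{e_1,\ldots,e_k\}$ of $G-e$ there exist a vertex $c\notin\{a,b\}$ with $\{c,a\}\in E(G)$ or $\{c,b\}\in E(G)$, and an index $j$ with $c\in e_j$ and $e_1\cdots \widehat{e_j}\cdots e_k\in I(G-\{a,b\})^{[k-1]}$. Then the ideal $L(G,e,k):=I(G-e)^{[k]}\cap (ab)\,I(G-\{a,b\})^{[k-1]}$ is generated in degree $2k+1$, i.e. all its minimal monomial generators have degree $2k+1$.
   Context: $G$ is a finite simple graph on vertex set $\{x_1,\ldots,x_n\}$ identified with the variables of $S=K[x_1,\ldots,x_n]$ ($K$ a field); edges are identified with degree-2 monomials. For a graph $H$, $I(H)^{[k]}$ is the ideal generated by all products $e_1\cdots e_k$ over $k$-matchings of $H$. $G-e$ is the graph on the same vertex set as $G$ with the edge $e$ removed; $G-\{a,b\}$ is the induced subgraph on $V(G)\setminus\{a,b\}$. The hat denotes omission of a factor. *)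

(* Defs.v *)
(* Monomial ideals of S = K[x_v : v in T] are encoded
   combinatorially through their monomials (exponent vectors). *)
From mathcomp Require Import all_boot.
Set Implicit Arguments. Unset Strict Implicit. Unset Printing Implicit Defensive.

Section Defs.
Variable T : finType.

Definition monomial := {ffun T -> nat}.

Definition mdvd (u w : monomial) : bool := [forall v, u v <= w v].
Definition mmul (u w : monomial) : monomial := [ffun v => u v + w v].
Definition mdeg (u : monomial) : nat := \sum_v u v.

Definition simple_graph (E : {set {set T}}) : Prop := forall f, f \in E -> #|f| = 2.

Definition matching (E M : {set {set T}}) : bool :=
  (M \subset E) &&
  [forall e1 in M, forall e2 in M, (e1 != e2) ==> [disjoint e1 & e2]].

(* the monomial e_1 ... e_r of a set of edges (squarefree for a matching) *)
Definition edge_mono (M : {set {set T}}) : monomial :=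
  [ffun v => #|[set f in M | v \in f]|].

(* the monomial u lies in I(H)^[k], H with edge set E *)
Definition in_matching_ideal (E : {set {set T}}) (k : nat) (u : monomial) : bool :=
  [exists M : {set {set T}}, [&& matching E M, #|M| == k & mdvd (edge_mono M) u]].

Definition del_edge (E : {set {set T}}) (e : {set T}) := E :\ e.
(* G - {a,b} : induced subgraph on V \ {a,b}; its edges are those avoiding a,b *)
Definition del_verts (E : {set {set T}}) (a b : T) :=
  [set f in E | (a \notin f) && (b \notin f)].

(* u lies in (ab) I(G - {a,b})^[k-1] *)
Definition in_ab_ideal (E : {set {set T}}) (a b : T) (k : nat) (u : monomial) : bool :=
  [exists M : {set {set T}},
     [&& matching (del_verts E a b) M, #|M| == k.-1 &
         mdvd (mmul (edge_mono [set [set a; b]]) (edge_mono M)) u]].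

(* monomials of L(G,e,k) = I(G-e)^[k] ∩ (ab) I(G-{a,b})^[k-1]
   (the intersection of monomial ideals is spanned by the common monomials) *)
Definition in_L (E : {set {set T}}) (a b : T) (k : nat) (u : monomial) : bool :=
  in_matching_ideal (del_edge E [set a; b]) k u && in_ab_ideal E a b k u.

Definition min_mono_gen (P : monomial -> bool) (u : monomial) : Prop :=
  P u /\ forall w, mdvd w u -> w != u -> ~~ P w.

End Defs.

(* Main.v *)
Require Import Defs.
From mathcomp Require Import all_boot.
From mathcomp Require Import zify.

Section Helpers.
Set Implicit Arguments.
Unset Strict Implicit.
Variable T : finType.

Lemma card_sum_in (M : {set {set T}}) v :
  #|[set f in M | v \in f]| = \sum_(f in M) (v \in f).
Proof.
rewrite -sum1_card big_mkcond /= [RHS]big_mkcond /=.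
apply eq_bigr => f _; rewrite inE; by case: (f \in M); case: (v \in f).
Qed.

Lemma deg_edge_mono (E M : {set {set T}}) :
  simple_graph E -> M \subset E -> mdeg (edge_mono M) = 2 * #|M|.
Proof.
move=> sg sME; rewrite /mdeg.
under eq_bigr do rewrite ffunE card_sum_in.
rewrite exchange_big /= -sum1_card big_distrr /=.
apply eq_bigr => f fM; rewrite muln1 -(sg f (subsetP sME f fM)).
rewrite -(sum1_card (mem f)) [RHS]big_mkcond /=; apply eq_bigr => v _; by case: (v \in f).
Qed.

Lemma mdvd_deg_eq (u w : monomial T) :
  mdvd u w -> mdeg w <= mdeg u -> forall v, u v = w v.
Proof.
move=> /forallP H Hd v; apply/eqP; rewrite eqn_leq H /=.
have E : mdeg w = mdeg u + \sum_x (w x - u x).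
  by rewrite /mdeg -big_split /=; apply eq_bigr => x _; rewrite subnKC.
have : \sum_x (w x - u x) == 0 by move: Hd; rewrite E; lia.
by rewrite sum_nat_eq0 => /forallP /(_ v); rewrite subn_eq0.
Qed.

Lemma edge_mono0 (X : {set {set T}}) v h :
  edge_mono X v = 0 -> h \in X -> v \notin h.
Proof.
rewrite ffunE => /eqP; rewrite cards_eq0 => /eqP H hX; apply/negP => vh.
have : h \in [set f in X | v \in f] by rewrite inE hX vh.
by rewrite H inE.
Qed.

Lemma edge_mono1_le (g : {set T}) v : edge_mono [set g] v <= (v \in g).
Proof.
rewrite ffunE; case: (boolP (v \in g)) => vg.
  rewrite /= -(cards1 g); apply: subset_leq_card; apply/subsetP => h.
  by rewrite !inE => /andP[-> _].
rewrite leqn0 cards_eq0; apply/eqP/setP => h; rewrite !inE.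
apply/negbTE/andP => [[/eqP -> ]]; exact/negP.
Qed.

Lemma edge_mono_U1_le (X : {set {set T}}) g v :
  edge_mono (X :|: [set g]) v <= edge_mono X v + edge_mono [set g] v.
Proof.
rewrite !ffunE.
have -> : [set f in X :|: [set g] | v \in f] =
          [set f in X | v \in f] :|: [set f in [set g] | v \in f].
  by apply/setP => h; rewrite !inE andb_orl.
by rewrite cardsU leq_subr.
Qed.

Lemma edge_mono_D1_le (X : {set {set T}}) g v :
  edge_mono (X :\ g) v <= edge_mono X v.
Proof.
rewrite !ffunE; apply: subset_leq_card; apply/subsetP => h.
by rewrite !inE => /andP[/andP[_ ->] ->].
Qed.

Lemma leb_nat (b1 b2 : bool) : (b1 -> b2) -> (b1 : nat) <= b2.
Proof. by case: b1; case: b2 => // H; move: (H isT). Qed.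

End Helpers.

Theorem lemma4p2 (T : finType) (E : {set {set T}}) (k : nat) (a b : T) :
  simple_graph E -> 2 <= k -> a != b -> [set a; b] \in E ->
  (forall M : {set {set T}},
     matching (del_edge E [set a; b]) M -> #|M| = k ->
     exists c : T, [/\ c \notin [set a; b],
       ([set c; a] \in E) || ([set c; b] \in E) &
       exists2 f, f \in M /\ c \in f &
         in_matching_ideal (del_verts E a b) k.-1 (edge_mono (M :\ f))]) ->
  forall u : monomial T, min_mono_gen (in_L E a b k) u -> mdeg u = 2 * k + 1.
Proof.
move=> sg k2 ab eE Hyp u [/andP [Hu1 Hu2] Hmin].
case/existsP: Hu1 => M /and3P [mM /eqP cM dMu].
case/existsP: Hu2 => N /and3P [mN _ dNu].
have ua : 0 < u a.
  move/forallP: dNu => /(_ a); apply: leq_trans; rewrite ffunE.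
  apply: leq_trans (leq_addr _ _); rewrite ffunE card_gt0; apply/set0Pn.
  by exists [set a; b]; rewrite inE set11 /= !inE eqxx.
have ub : 0 < u b.
  move/forallP: dNu => /(_ b); apply: leq_trans; rewrite ffunE.
  apply: leq_trans (leq_addr _ _); rewrite ffunE card_gt0; apply/set0Pn.
  by exists [set a; b]; rewrite inE set11 /= !inE eqxx orbT.
have [c [cab cadj [f [fM cf] Nin]]] := Hyp M mM cM.
case/existsP: Nin => N' /and3P [mN' /eqP cN' dN'].
have sME : M \subset E.
  move/andP: mM => [/subsetP H _]; apply/subsetP => h /H; rewrite !inE.
  by case/andP.
have sME' : M :\ f \subset E.
  by apply: subset_trans sME; apply/subsetP => h; rewrite !inE => /andP[].
have sNE : N' \subset E.
  move/andP: mN' => [/subsetP H _]; apply/subsetP => h /H; rewrite !inE.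
  by case/andP.
have cMf : #|M :\ f| = k.-1 by move: (cardsD1 f M); rewrite fM cM => ->; rewrite add1n.
have degM' : mdeg (edge_mono (M :\ f)) = 2 * k.-1 by rewrite (deg_edge_mono sg sME') cMf.
have degN' : mdeg (edge_mono N') = 2 * k.-1 by rewrite (deg_edge_mono sg sNE) cN'.
have eqN' := mdvd_deg_eq dN' (eq_leq (etrans degM' (esym degN'))).
have N'0 : forall v, v \in [set a; b] -> edge_mono N' v = 0.
  move=> v vab; rewrite ffunE; apply/eqP; rewrite cards_eq0; apply/eqP/setP => h.
  rewrite !inE; apply/negbTE/andP => [[hN vh]].
  move/andP: mN' => [/subsetP H _]; move: (H h hN); rewrite !inE.
  by case/and3P => _; move: vab; rewrite !inE => /orP [] /eqP <-; rewrite vh.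
have Ma0 : edge_mono (M :\ f) a = 0 by rewrite -eqN' N'0 // !inE eqxx.
have Mb0 : edge_mono (M :\ f) b = 0 by rewrite -eqN' N'0 // !inE eqxx orbT.
have Mc0 : edge_mono (M :\ f) c = 0.
  rewrite ffunE; apply/eqP; rewrite cards_eq0; apply/eqP/setP => h.
  rewrite !inE; apply/negbTE; apply/negP => /andP [/andP [hf hM] ch].
  move/andP: mM => [_ /forall_inP /(_ h hM) /forall_inP /(_ f fM)].
  by rewrite hf /= => /disjointFr /(_ ch); rewrite cf.
have [ca cb] : c != a /\ c != b by move: cab; rewrite !inE negb_or => /andP[].
pose x := if [set c; a] \in E then a else b.
have cxE : [set c; x] \in E by rewrite /x; case: ifP => //; move: cadj; case: ([set c; a] \in E).
have xab : x \in [set a; b] by rewrite /x; case: ifP; rewrite !inE eqxx ?orbT.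
have Mx0 : edge_mono (M :\ f) x = 0 by move: xab; rewrite !inE => /orP [] /eqP ->.
pose w : monomial T := [ffun v => edge_mono (M :\ f) v + (v \in [set a; b; c])].
have wu : mdvd w u.
  apply/forallP => v; rewrite ffunE; have [hv|hv] := boolP (v \in [set a; b; c]).
    move: hv; rewrite !inE -orbA; case/or3P => /eqP ->; rewrite ?Ma0 ?Mb0 ?Mc0 //.
    move/forallP: dMu => /(_ c); apply: leq_trans; rewrite ffunE card_gt0.
    by apply/set0Pn; exists f; rewrite inE fM cf.
  rewrite addn0; apply: leq_trans (edge_mono_D1_le _ _ _) _.
  by move/forallP: dMu.
have wL : in_L E a b k w.
  apply/andP; split.
  - apply/existsP; exists ((M :\ f) :|: [set [set c; x]]); apply/and3P; split.
    + apply/andP; split.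
        apply/subsetP => h; rewrite !inE => /orP [/andP [_ hM] | /eqP ->].
          by move/andP: mM => [/subsetP H _]; move: (H h hM); rewrite !inE.
        rewrite cxE andbT; apply/negP => /eqP H; move: cab.
        by rewrite -H !inE eqxx.
      have disj : forall h, h \in M :\ f -> [disjoint [set c; x] & h].
        move=> h hM; rewrite -setI_eq0; apply/eqP/setP => y; rewrite !inE.
        apply/negbTE; apply/negP => /andP [/orP [] /eqP -> yh].
          by move: (edge_mono0 Mc0 hM); rewrite yh.
        by move: (edge_mono0 Mx0 hM); rewrite yh.
      apply/forall_inP => h1; rewrite !inE => h1M; apply/forall_inP => h2.
      rewrite !inE => h2M; apply/implyP => ne.
      case/orP: h1M => [h1M | /eqP e1]; case/orP: h2M => [h2M | /eqP e2].
      * move: h1M h2M => /andP [_ h1M] /andP [_ h2M].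
        by move/andP: mM => [_ /forall_inP /(_ h1 h1M) /forall_inP /(_ h2 h2M)] /implyP /(_ ne).
      * rewrite e2 disjoint_sym; apply: disj; by rewrite in_setD1.
      * rewrite e1; apply: disj; by rewrite in_setD1.
      * by move: ne; rewrite e1 e2 eqxx.
    + rewrite setUC cardsU1 cMf.
      have -> : [set c; x] \notin M :\ f.
        apply/negP => H; move: (edge_mono0 Mc0 H); by rewrite !inE eqxx.
      by rewrite /= add1n prednK // ltnW.
    + apply/forallP => v; apply: leq_trans (edge_mono_U1_le _ _ _) _.
      rewrite [w v]ffunE leq_add2l; apply: leq_trans (edge_mono1_le _ _) _.
      apply: leb_nat; rewrite !inE => /orP [/eqP -> | /eqP ->]; first by rewrite eqxx !orbT.
      by move: xab; rewrite !inE => /orP [] ->; rewrite ?orbT.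
  - apply/existsP; exists N'; apply/and3P; split => //; first by rewrite cN'.
    apply/forallP => v; rewrite [mmul _ _ v]ffunE [w v]ffunE.
    have H1 := edge_mono1_le [set a; b] v.
    rewrite eqN' addnC leq_add2l.
    apply: leq_trans H1 _; apply: leb_nat; rewrite !inE => /orP [] ->; by rewrite ?orbT.
have degw : mdeg w = 2 * k + 1.
  rewrite /mdeg; under eq_bigr do rewrite ffunE; rewrite big_split /=.
  rewrite -/(mdeg _) degM'.
  have -> : \sum_v (v \in [set a; b; c] : nat) = 3.
    rewrite -[RHS]/(3 : nat).
    transitivity #|[set a; b; c]|.
      by rewrite -sum1_card [RHS]big_mkcond /=; apply eq_bigr => v _; case: (_ \in _).
    have -> : [set a; b; c] = a |: (b |: [set c]) by apply/setP => y; rewrite !inE orbA.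
    rewrite !cardsU1 cards1 !inE negb_or ab /= eq_sym ca /= eq_sym cb.
    by [].
  by move: k2; clear; lia.
case: (eqVneq w u) => [<- // | neq].
by move: (Hmin w wu neq); rewrite wL.
Qed.
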